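(* Every randomized dynamic posted-price (RDPP) mechanism, with any price update rule, is ex post incentive compatible for myopic bidders and dominant-strategy incentive compatible for myopic miners.
   Context: Dynamic posted-price setting: at each time step a block with $m$ slots is produced by an active miner; $n$ bidders with private values $v_i\ge 0$ submit bids $b_i$, each participating only once. Given the current posted price $q>0$, the eligible set is $M(q)=\{i:b_i\ge q\}$. A block is a set $B\subseteq M(q)$ with $|B|\le m$; each $i\in B$ receives a slot and pays $q$. The next posted price is $T(q,B)$ for a price update rule $T$. In an RDPP mechanism, the intended allocation rule is the random maximal (RM) rule: the miner selects $B$ uniformly at random among the maximal feasible sets, i.e. subsets of $M(q)$ of size $\min\{m,|M(q)|\}$. A myopic bidder's utility is $v_i-q$ if included and $0$ otherwise (in expectation over the allocation randomness); ex post IC for myopic bidders means that, when the miner follows the intended allocation rule, bidding $b_i=v_i$ weakly dominates every other bid for every bidder, for all bids of the others. A myopic miner's utility is the total payment $q|B|$ collected in the current block; DSIC for myopic miners means that following the intended allocation rule is a (weakly) dominant, utility-maximizing strategy for the miner for all bids. *)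

(* Defs.v *)
From mathcomp Require Import all_boot all_order all_algebra.
Set Implicit Arguments. Unset Strict Implicit. Unset Printing Implicit Defensive.
Import Order.TTheory GRing.Theory Num.Theory.
Local Open Scope ring_scope.

Section RDPP.
Variables (R : realFieldType) (n : nat).

Definition bids := 'I_n -> R.

Definition set_bid (b : bids) (i : 'I_n) (x : R) : bids :=
  fun j => if j == i then x else b j.

Definition eligible (b : bids) (q : R) : {set 'I_n} := [set i | q <= b i].

Definition feasible_block (m : nat) (b : bids) (q : R) (B : {set 'I_n}) : bool :=
  (B \subset eligible b q) && (#|B| <= m)%N.

Definition maximal_feasible (m : nat) (b : bids) (q : R) : {set {set 'I_n}} :=
  [set B : {set 'I_n} | (B \subset eligible b q) &&
                        (#|B| == minn m #|eligible b q|)].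

(* A (randomized) allocation = a probability distribution over blocks. *)
Definition alloc := {set 'I_n} -> R.

Definition is_distribution (P : alloc) : Prop :=
  (forall B, 0 <= P B) /\ \sum_(B : {set 'I_n}) P B = 1.

Definition feasible_alloc (m : nat) (b : bids) (q : R) (P : alloc) : Prop :=
  is_distribution P /\ (forall B, P B != 0 -> feasible_block m b q B).

Definition RM (m : nat) (b : bids) (q : R) : alloc :=
  fun B => if B \in maximal_feasible m b q
           then (#|maximal_feasible m b q|%:R)^-1 else 0.

(* An RDPP mechanism with update rule T: at price q the miner selects a block
   B according to RM, each included bidder pays q, and the next price is T q B. *)
Definition RDPP_outcome (T : R -> {set 'I_n} -> R) (m : nat) (b : bids) (q : R)
  : {set 'I_n} -> (R * R) :=
  fun B => (RM m b q B, T q B).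

Definition bidder_utility (i : 'I_n) (v q : R) (P : alloc) : R :=
  \sum_(B : {set 'I_n}) P B * (if i \in B then v - q else 0).

Definition miner_utility (q : R) (P : alloc) : R :=
  \sum_(B : {set 'I_n}) P B * (q * #|B|%:R).

Definition RDPP_alloc (T : R -> {set 'I_n} -> R) (m : nat) (b : bids) (q : R)
  : alloc := fun B => (RDPP_outcome T m b q B).1.

Definition expost_IC_myopic_bidders (T : R -> {set 'I_n} -> R) (m : nat) (q : R) : Prop :=
  forall (i : 'I_n) (v : R), 0 <= v ->
  forall (b : bids) (x : R),
    bidder_utility i v q (RDPP_alloc T m (set_bid b i x) q)
    <= bidder_utility i v q (RDPP_alloc T m (set_bid b i v) q).

Definition DSIC_myopic_miner (T : R -> {set 'I_n} -> R) (m : nat) (q : R) : Prop :=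
  forall (b : bids) (P : alloc), feasible_alloc m b q P ->
    miner_utility q P <= miner_utility q (RDPP_alloc T m b q).

End RDPP.

(* Main.v *)
Require Import Defs.
From mathcomp Require Import all_boot all_order all_algebra.
Import Order.TTheory GRing.Theory Num.Theory.
Local Open Scope ring_scope.

Section H.
Variables (R : realFieldType) (n m : nat).

Lemma card_maxf (b : bids R n) q :
  #|maximal_feasible m b q| = 'C(#|eligible b q|, minn m #|eligible b q|).
Proof. by rewrite /maximal_feasible cards_draws. Qed.

Lemma card_maxf_gt0 (b : bids R n) q : (0 < #|maximal_feasible m b q|)%N.
Proof. by rewrite card_maxf bin_gt0 geq_minr. Qed.

Lemma RM_ge0 (b : bids R n) q B : 0 <= RM m b q B.
Proof. by rewrite /RM; case: ifP => // _; rewrite invr_ge0 ler0n. Qed.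

Lemma util_out (T : R -> {set 'I_n} -> R) (b : bids R n) q i v :
  ~~ (q <= b i) -> bidder_utility i v q (RDPP_alloc T m b q) = 0.
Proof.
move=> hi; apply: big1 => B _; rewrite /RDPP_alloc /RDPP_outcome /= /RM.
case: ifP => [hB|]; last by rewrite mul0r.
case: ifP => [iB|]; last by rewrite mulr0.
move: hB; rewrite inE => /andP[/subsetP/(_ _ iB)]; rewrite inE => h.
by rewrite h in hi.
Qed.

Lemma elig_eq (b : bids R n) i x y q : q <= x -> q <= y ->
  eligible (set_bid b i x) q = eligible (set_bid b i y) q.
Proof.
move=> hx hy; apply/setP => j; rewrite !inE /set_bid.
by case: ifP; rewrite ?hx ?hy.
Qed.

End H.

Theorem mainTheorem2 (R : realFieldType) (n m : nat)
  (T : R -> {set 'I_n} -> R) (q : R) (hq : 0 < q) :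
  expost_IC_myopic_bidders T m q /\ DSIC_myopic_miner T m q.
Proof.
split.
- move=> i v v0 b x.
  have si : forall y, set_bid b i y i = y by move=> y; rewrite /set_bid eqxx.
  have [hx|hx] := leP q x; last first.
    rewrite (@util_out R n m T (set_bid b i x)); last by rewrite si -ltNge.
    have [hv|hv] := leP q v; last first.
      by rewrite util_out // si -ltNge.
    apply: sumr_ge0 => B _; apply: mulr_ge0; first exact: RM_ge0.
    by case: ifP => //; rewrite subr_ge0.
  have [hv|hv] := leP q v.
    by rewrite /bidder_utility /RDPP_alloc /RDPP_outcome /RM /maximal_feasible
      (@elig_eq R n b i x v q hx hv).
  rewrite (@util_out R n m T (set_bid b i v)); last by rewrite si -ltNge.
  apply: sumr_le0 => B _; apply: mulr_ge0_le0; first exact: RM_ge0.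
  by case: ifP => // _; rewrite subr_le0 ltW.
- move=> b P [[P0 P1] Pf].
  set k := minn m #|eligible b q|.
  have -> : miner_utility q (RDPP_alloc T m b q) = q * k%:R.
    rewrite /miner_utility /RDPP_alloc /RDPP_outcome /= /RM.
    rewrite (bigID (fun B => B \in maximal_feasible m b q)) /=.
    rewrite [X in _ + X]big1 ?addr0; last by move=> B /negbTE ->; rewrite mul0r.
    rewrite (eq_bigr (fun _ => (#|maximal_feasible m b q|%:R)^-1 * (q * k%:R))); last first.
      by move=> B hB; rewrite hB; move: hB; rewrite inE => /andP[_ /eqP ->].
    rewrite sumr_const.
    move: (@card_maxf_gt0 R n m b q); move: #|maximal_feasible m b q| => N hN.
    rewrite -mulrnAl -[N%:R^-1 *+ N]mulr_natr mulVf ?mul1r //.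
    by rewrite pnatr_eq0 -lt0n.
  have -> : q * k%:R = \sum_B P B * (q * k%:R) by rewrite -mulr_suml P1 mul1r.
  apply: ler_sum => B _.
  have [->|hP] := eqVneq (P B) 0; first by rewrite !mul0r.
  apply: ler_wpM2l; first exact: P0.
  apply: ler_wpM2l; first exact: ltW.
  rewrite ler_nat; move/Pf: hP => /andP[sB cB].
  by rewrite leq_min cB (subset_leq_card sB).
Qed.
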